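(* Let $\mathbb{F}$ be a finite field, $d,D\ge 0$ integers, $\gamma>0$, $f:\mathbb{F}^2\to\mathbb{F}$. For $a\in\mathbb{F}$ let $C_a(y)$ be a best-fit degree-$d$ polynomial for $f$ on the vertical line $\{(a,y):y\in\mathbb{F}\}$, and for $b\in\mathbb{F}$ let $R_b(x)$ be a best-fit degree-$d$ polynomial for $f$ on the horizontal line $\{(x,b):x\in\mathbb{F}\}$. Let $H\subseteq\mathbb{F}^2$ be such that $C_a(b)=R_b(a)=f(a,b)$ for all $(a,b)\in H$. Let $S_1,S_2\subseteq\mathbb{F}$ with $S_1\neq\emptyset$ be such that for every $b\in S_2$, $|\{a\in S_1:(a,b)\in H\}|\ge\frac{\gamma}{2}|S_1|$, and suppose $D<\frac{\gamma}{2}|S_1|$. If $A(x,y,z)\in\mathbb{F}[x,y,z]$ has $(1,1,d)$-weighted degree at most $D$ and $A(a,y,C_a(y))\equiv 0$ for all $a\in S_1$, then $A(a,b,f(a,b))=0$ for all $(a,b)\in H$ with $b\in S_2$.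
   Context: The $(1,1,d)$-weighted degree of $A(x,y,z)$ is the maximum of $i+j+dk$ over monomials $x^iy^jz^k$ with non-zero coefficient. A best-fit degree-$d$ polynomial for $f$ on a line is a univariate polynomial of degree at most $d$ (in the line parameter) agreeing with $f$ on the maximum number of points of the line. *)

(* Defs.v *)
From HB Require Import structures.
From mathcomp Require Import all_boot all_order all_algebra.
From mathcomp Require Import mpoly.
Set Implicit Arguments. Unset Strict Implicit. Unset Printing Implicit Defensive.
Import Order.TTheory GRing.Theory Num.Theory.
Local Open Scope ring_scope.

(* The three variables x, y, z of F[x,y,z] are 'X_0, 'X_1, 'X_2 in {mpoly F[3]}. *)
Definition i0 : 'I_3 := @Ordinal 3 0 isT.
Definition i1 : 'I_3 := @Ordinal 3 1 isT.
Definition i2 : 'I_3 := @Ordinal 3 2 isT.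

Definition pt3 (T : Type) (x y z : T) : 'I_3 -> T :=
  fun i => nth x [:: x; y; z] (nat_of_ord i).

Definition wdeg (d : nat) (m : 'X_{1..3}) : nat := (m i0 + m i1 + d * m i2)%N.

Definition wdeg_le (F : ringType) (d D : nat) (A : {mpoly F[3]}) : Prop :=
  forall m, m \in msupp A -> (wdeg d m <= D)%N.

Definition agree (F : finFieldType) (g : F -> F) (p : {poly F}) : nat :=
  #|[set t : F | p.[t] == g t]|.

(* p is a best-fit degree-d polynomial for g (the restriction of f to a line,
   parametrized by t) *)
Definition best_fit (F : finFieldType) (d : nat) (g : F -> F) (p : {poly F}) : Prop :=
  (size p <= d.+1)%N /\
  forall q : {poly F}, (size q <= d.+1)%N -> (agree g q <= agree g p)%N.

(* A(a, y, c(y)) as a univariate polynomial in y *)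
Definition subst_col (F : finFieldType) (A : {mpoly F[3]}) (a : F) (c : {poly F})
  : {poly F} :=
  meval (pt3 a%:P 'X c) (map_mpoly (fun u : F => u%:P) A).

(* Main.v *)
Require Import Defs.
From HB Require Import structures.
From mathcomp Require Import all_boot all_order all_algebra.
From mathcomp Require Import mpoly.
From mathcomp Require Import zify.
Import Order.TTheory GRing.Theory Num.Theory.
Local Open Scope ring_scope.

Lemma meval_mapC (F : finFieldType) (v : 'I_3 -> {poly F}) (A : {mpoly F[3]}) :
  meval v (map_mpoly (fun u : F => u%:P) A) =
  \sum_(m <- msupp A) (A@_m)%:P * \prod_i v i ^+ m i.
Proof.
rewrite mevalE (perm_big _ (msupp_map_mpoly _ (@polyC_inj F))) /=.
by apply: eq_bigr => m _; rewrite mcoeff_map_mpoly.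
Qed.

Lemma horner_meval {F : finFieldType} (v : 'I_3 -> {poly F}) (A : {mpoly F[3]}) t :
  (meval v (map_mpoly (fun u : F => u%:P) A)).[t] = meval (fun i => (v i).[t]) A.
Proof.
rewrite meval_mapC mevalE horner_sum; apply: eq_bigr => m _.
rewrite hornerM hornerC horner_prod; congr (_ * _).
by apply: eq_bigr => i _; rewrite horner_exp.
Qed.

Lemma pt3_horner {F : finFieldType} (x y z : {poly F}) t :
  (fun i => (pt3 x y z i).[t]) =1 pt3 x.[t] y.[t] z.[t].
Proof. by case=> [[|[|[|k]]] ?]. Qed.

Lemma size_mul_le {F : finFieldType} {p q : {poly F}} {k l : nat} :
  (size p <= k.+1)%N -> (size q <= l.+1)%N -> (size (p * q)%R <= (k + l).+1)%N.
Proof. move=> hp hq; have := size_polyMleq p q; lia. Qed.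

Lemma size_exp_le {F : finFieldType} {p : {poly F}} {k : nat} n :
  (size p <= k.+1)%N -> (size (p ^+ n) <= (k * n).+1)%N.
Proof.
move=> hp; elim: n => [|n IH]; first by rewrite expr0 size_poly1.
rewrite exprS; have := size_mul_le hp IH; rewrite mulnS; lia.
Qed.

Theorem lemmaA4 (F : finFieldType) (K : realFieldType) (d D : nat) (gamma : K)
  (f : F -> F -> F) (C R : F -> {poly F}) (H : {set F * F}) (S1 S2 : {set F})
  (A : {mpoly F[3]}) :
  0 < gamma ->
  (forall a : F, best_fit d (fun y => f a y) (C a)) ->
  (forall b : F, best_fit d (fun x => f x b) (R b)) ->
  (forall a b : F, (a, b) \in H -> (C a).[b] = f a b /\ (R b).[a] = f a b) ->
  S1 != set0 ->
  (forall b, b \in S2 ->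
     gamma / 2 * (#|S1|%:R) <= (#|[set a in S1 | (a, b) \in H]|%:R : K)) ->
  (D%:R : K) < gamma / 2 * (#|S1|%:R) ->
  wdeg_le d D A ->
  (forall a, a \in S1 -> subst_col A a (C a) = 0) ->
  forall a b : F, (a, b) \in H -> b \in S2 -> meval (pt3 a b (f a b)) A = 0.
Proof.
move=> _ _ bfR hH _ hS2 hD hA hcol a b hab hb.
pose P := meval (pt3 'X b%:P (R b)) (map_mpoly (fun u : F => u%:P) A).
have Pev : forall x, P.[x] = meval (pt3 x b (R b).[x]) A.
  move=> x; rewrite /P horner_meval (meval_eq _ (pt3_horner _ _ _ _)).
  by rewrite hornerX hornerC.
have colev : forall x, x \in S1 -> meval (pt3 x b (C x).[b]) A = 0.
  move=> x hx; have := congr1 (fun p => p.[b]) (hcol x hx).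
  rewrite /subst_col horner_meval (meval_eq _ (pt3_horner _ _ _ _)) hornerC hornerX.
  by rewrite horner0.
have sR : (size (R b) <= d.+1)%N by case: (bfR b).
have sP : (size P <= D.+1)%N.
  rewrite /P meval_mapC big_seq; elim/big_ind: _.
  - by rewrite size_poly0.
  - by move=> p q hp hq; apply: leq_trans (size_polyD p q) _; rewrite geq_max hp hq.
  move=> m hm; have := hA m hm; rewrite /wdeg => hw.
  rewrite !big_ord_recl big_ord0 mulr1 /=.
  have e1 : lift ord0 (@ord0 1) = i1 by apply: val_inj.
  have e2 : lift ord0 (lift ord0 (@ord0 0)) = i2 by apply: val_inj.
  have e0 : (@ord0 2) = i0 by apply: val_inj.
  rewrite e1 e2 e0.
  have h1 := size_polyC_leq1 A@_m.
  have h2 : (size ('X ^+ m i0 : {poly F}) <= (m i0).+1)%N by rewrite size_polyXn.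
  have h3 : (size (b%:P ^+ m i1) <= (0 * m i1).+1)%N.
    by apply: size_exp_le; apply: size_polyC_leq1.
  have h4 := size_exp_le (m i2) sR.
  have := size_mul_le h1 (size_mul_le h2 (size_mul_le h3 h4)).
  move=> h; apply: leq_trans h _; lia.
have hT := lt_le_trans hD (hS2 b hb); rewrite ltr_nat in hT.
set T := [set a in S1 | (a, b) \in H] in hT.
have P0 : P = 0.
  apply/eqP/negPn/negP => Pn0.
  have := max_poly_roots Pn0 (rs := enum T).
  rewrite enum_uniq -cardE => /(_ _ isT).
  have -> : all (root P) (enum T).
    apply/allP => x; rewrite mem_enum inE => /andP [hx hxb].
    have [hc hr] := hH _ _ hxb.
    by rewrite /root Pev hr -hc colev.
  move=> /(_ isT) hlt.
  have h2 : (#|T| < size P)%N := hlt.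
  have h3 : (D < #|T|)%N := hT.
  lia.
have [_ hr] := hH _ _ hab.
by rewrite -hr -Pev P0 horner0.
Qed.
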